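(* In $\mathfrak{sl}_2[[u]]$ let $v=(1+u)^{-1}-1$ and $\mathcal Y_k=(-1)^k(u^k-v^k)h$ ($k\ge0$). Then $\mathcal Y_0=0$ and for every $n\ge1$ $$\mathcal Y_{2n}=\sum_{k\ge n}(-1)^{k-n+1}\frac{(4^{k-n+1}-1)B_{k-n+1}}{k-n+1}\binom{2k}{2n-1}\mathcal Y_{2k+1},$$ the sum converging $u$-adically. Consequently, for every $L\ge1$, the same relation (a finite sum) holds among the images of $Y_k=(-1)^k\big((t-1)^k-(t^{-1}-1)^k\big)h$ in $\mathfrak{OA}/\mathfrak I_{(t-1)^L}$, where $Y_k\mapsto0$ for $k\ge L$.
   Context: $\mathfrak{sl}_2$ over $\mathbb C$ has basis $e,f,h$ with $[e,f]=h$, $[h,e]=2e$, $[h,f]=-2f$; $\mathfrak{sl}_2[[u]]=\mathbb C[[u]]\otimes\mathfrak{sl}_2$. Bernoulli numbers: define $b_j$ by $\frac{x}{e^x-1}=\sum_{j\ge0}b_j\frac{x^j}{j!}$ and set $B_j=(-1)^{j-1}b_{2j}$ for $j\ge1$ (so $B_1=1/6$, $B_2=1/30$). The Onsager algebra is $\mathfrak{OA}=\{p(t)e+p(t^{-1})f+q(t)h:\ p,q\in\mathbb C[t,t^{-1}],\ q(t^{-1})=-q(t)\}\subset\mathbb C[t,t^{-1}]\otimes\mathfrak{sl}_2$, and $\mathfrak I_{(t-1)^L}=\{p(t)e+p(t^{-1})f+q(t)h\in\mathfrak{OA}: p,q\in(t-1)^L\mathbb C[t,t^{-1}]\}$ is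 an ideal. Taylor expansion at $t=1$ ($u=t-1$) embeds $\mathfrak{OA}$ into $\mathfrak{sl}_2[[u]]$, sending $Y_k$ to $\mathcal Y_k$. *)

(* Defs.v *)
From mathcomp Require Import all_boot all_algebra.
From mathcomp Require Import reals complex.
Set Implicit Arguments. Unset Strict Implicit. Unset Printing Implicit Defensive.
Import GRing.Theory Num.Theory.
Local Open Scope ring_scope.

(* An element of sl2[[u]] of the form a(u) h is represented by its
   h-coefficient a(u) in K[[u]], i.e. by its coefficient sequence. *)
Definition fps (K : fieldType) := nat -> K.

Section FPS.
Variable K : fieldType.
Definition fps0 : fps K := fun _ => 0.
Definition fps1 : fps K := fun m => (m == 0)%:R.
Definition fpsu : fps K := fun m => (m == 1)%:R.
Definition fpsadd (f g : fps K) : fps K := fun m => f m + g m.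
Definition fpssub (f g : fps K) : fps K := fun m => f m - g m.
Definition fpsscale (c : K) (f : fps K) : fps K := fun m => c * f m.
Definition fpsmul (f g : fps K) : fps K :=
  fun m => \sum_(i < m.+1) f i * g (m - i)%N.
Definition fpspow (f : fps K) (k : nat) : fps K := iter k (fpsmul f) fps1.

Definition calY (v : fps K) (k : nat) : fps K :=
  fpsscale ((-1) ^+ k) (fpssub (fpspow fpsu k) (fpspow v k)).
End FPS.

(* b : nat -> K are the Bernoulli numbers iff x/(e^x-1) = sum_j b_j x^j/j!,
   i.e. ((e^x-1)/x) * (sum_j b_j x^j/j!) = 1, coefficientwise: *)
Definition is_bernoulli (K : fieldType) (b : nat -> K) : Prop :=
  forall m : nat,
    \sum_(j < m.+1) b j / ((j`!)%:R * (((m - j).+1)`!)%:R) = (m == 0)%:R.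

Definition bigB (K : fieldType) (b : nat -> K) (j : nat) : K :=
  (-1) ^+ (j.-1) * b (2 * j)%N.

Definition relcoef (K : fieldType) (b : nat -> K) (n k : nat) : K :=
  let j := (k - n).+1 in
  (-1) ^+ j * ((4 ^ j)%:R - 1) * bigB b j / j%:R * ('C(2 * k, (2 * n).-1))%:R.

(* A pair (p, n) represents the Laurent polynomial p(t) * t^(-n). *)
Definition laurent (K : fieldType) := ({poly K} * nat)%type.

Section Laurent.
Variable K : fieldType.
Definition lconst (c : K) : laurent K := (c%:P, 0%N).
Definition lt : laurent K := ('X, 0%N).
Definition ltinv : laurent K := (1, 1%N).
Definition ladd (x y : laurent K) : laurent K :=
  (x.1 * 'X^(y.2) + y.1 * 'X^(x.2), (x.2 + y.2)%N).
Definition lmul (x y : laurent K) : laurent K := (x.1 * y.1, (x.2 + y.2)%N).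
Definition lscale (c : K) (x : laurent K) : laurent K := (c *: x.1, x.2).
Definition lsub (x y : laurent K) : laurent K := ladd x (lscale (-1) y).
Definition lpow (x : laurent K) (k : nat) : laurent K := iter k (lmul x) (lconst 1).
Definition lsum (n K' : nat) (F : nat -> laurent K) : laurent K :=
  foldr (fun k acc => ladd (F k) acc) (lconst 0) (iota n (K' - n)).

(* x lies in the ideal (t-1)^L C[t,t^-1] of C[t,t^-1]:
   p t^-n = (t-1)^L r t^-m for some polynomial r and m. *)
Definition in_tideal (L : nat) (x : laurent K) : Prop :=
  exists (r : {poly K}) (m : nat), x.1 * 'X^m = ('X - 1) ^+ L * r * 'X^(x.2).

Definition OY (k : nat) : laurent K :=
  lscale ((-1) ^+ k)
    (lsub (lpow (lsub lt (lconst 1)) k) (lpow (lsub ltinv (lconst 1)) k)).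
End Laurent.

(* Main.v *)
Require Import Defs.
From mathcomp Require Import all_boot all_algebra.
From mathcomp Require Import reals complex.
From mathcomp Require Import ring lra zify.
From Stdlib Require Import Setoid Morphisms FunctionalExtensionality.
Import GRing.Theory Num.Theory.
Local Open Scope ring_scope.
Set Implicit Arguments. Unset Strict Implicit. Unset Printing Implicit Defensive.

Section EQM.
Variable K : numFieldType.
Implicit Types p q r : {poly K}.

Definition eqm (N : nat) p q := forall i, (i < N)%N -> p`_i = q`_i.

Lemma eqm_refl N p : eqm N p p. Proof. by []. Qed.
Lemma eqm_sym N p q : eqm N p q -> eqm N q p.
Proof. by move=> h i hi; rewrite h. Qed.
Lemma eqm_trans N p q r : eqm N p q -> eqm N q r -> eqm N p r.
Proof. by move=> h1 h2 i hi; rewrite h1 // h2. Qed.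
Lemma eqm_eq N p q : p = q -> eqm N p q. Proof. by move->. Qed.
Lemma eqm_le N M p q : (M <= N)%N -> eqm N p q -> eqm M p q.
Proof. by move=> hMN h i hi; apply: h; apply: leq_trans hMN. Qed.
Lemma eqmD N p p' q q' : eqm N p p' -> eqm N q q' -> eqm N (p + q) (p' + q').
Proof. by move=> h1 h2 i hi; rewrite !coefD h1 // h2. Qed.
Lemma eqmN N p p' : eqm N p p' -> eqm N (- p) (- p').
Proof. by move=> h i hi; rewrite !coefN h. Qed.
Lemma eqmB N p p' q q' : eqm N p p' -> eqm N q q' -> eqm N (p - q) (p' - q').
Proof. by move=> h1 h2; apply: eqmD => //; apply: eqmN. Qed.
Lemma eqmM N p p' q q' : eqm N p p' -> eqm N q q' -> eqm N (p * q) (p' * q').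
Proof.
move=> h1 h2 i hi; rewrite !coefM; apply: eq_bigr => j _.
have hj : (j <= i)%N by rewrite -ltnS.
rewrite h1; last by apply: leq_ltn_trans hi.
rewrite h2 //; apply: leq_ltn_trans hi; exact: leq_subr.
Qed.
Lemma eqmMl N p q q' : eqm N q q' -> eqm N (p * q) (p * q').
Proof. by move=> h; apply: eqmM. Qed.
Lemma eqmMr N p p' q : eqm N p p' -> eqm N (p * q) (p' * q).
Proof. by move=> h; apply: eqmM. Qed.
Lemma eqmX N p p' k : eqm N p p' -> eqm N (p ^+ k) (p' ^+ k).
Proof. by move=> h; elim: k => [|k IH]; rewrite ?expr0 // !exprS; apply: eqmM. Qed.
Lemma eqmZ N c p p' : eqm N p p' -> eqm N (c *: p) (c *: p').
Proof. by move=> h i hi; rewrite !coefZ h. Qed.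
Lemma eqm_cancelX N p q : eqm N.+1 ('X * p) ('X * q) -> eqm N p q.
Proof. by move=> h i hi; have := h i.+1 hi; rewrite !coefXM. Qed.
Lemma eqm_mulX N p q : eqm N p q -> eqm N.+1 ('X * p) ('X * q).
Proof. by move=> h [|i] hi; rewrite !coefXM //= h. Qed.

Definition subst (c : K) p : {poly K} := \poly_(i < size p) (c ^+ i * p`_i).
Lemma coef_subst c p i : (subst c p)`_i = c ^+ i * p`_i.
Proof.
rewrite coef_poly; case: ltnP => // h.
by rewrite nth_default ?mulr0.
Qed.
Lemma substD c p q : subst c (p + q) = subst c p + subst c q.
Proof. by apply/polyP => i; rewrite coefD !coef_subst coefD mulrDr. Qed.
Lemma substN c p : subst c (- p) = - subst c p.
Proof. by apply/polyP => i; rewrite coefN !coef_subst coefN mulrN. Qed.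
Lemma substB c p q : subst c (p - q) = subst c p - subst c q.
Proof. by rewrite substD substN. Qed.
Lemma substM c p q : subst c (p * q) = subst c p * subst c q.
Proof.
apply/polyP => i; rewrite coef_subst !coefM mulr_sumr; apply: eq_bigr => j _.
rewrite !coef_subst.
have hj : (j <= i)%N by rewrite -ltnS.
rewrite -{1}(subnKC hj) exprD; ring.
Qed.
Lemma subst1 c : subst c 1 = 1.
Proof. by apply/polyP => i; rewrite coef_subst coef1; case: i => [|i] /=; rewrite ?expr0 ?mul1r ?mulr0. Qed.
Lemma substC c a : subst c a%:P = a%:P.
Proof. by apply/polyP => i; rewrite coef_subst coefC; case: i => [|i] /=; rewrite ?expr0 ?mul1r ?mulr0. Qed.
Lemma substX c : subst c 'X = c *: 'X.
Proof. by apply/polyP => i; rewrite coef_subst coefZ coefX; case: i => [|[|i]] /=; rewrite ?mulr0 ?mulr1 ?expr1. Qed.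
Lemma substZ c a p : subst c (a *: p) = a *: subst c p.
Proof. by apply/polyP => i; rewrite coefZ !coef_subst coefZ; ring. Qed.
Lemma substMX c p : subst c ('X * p) = c *: ('X * subst c p).
Proof. by rewrite substM substX -scalerAl. Qed.
Lemma eqm_subst N c p q : eqm N p q -> eqm N (subst c p) (subst c q).
Proof. by move=> h i hi; rewrite !coef_subst h. Qed.
End EQM.

Add Parametric Relation (K : numFieldType) (N : nat) : {poly K} (@eqm K N)
  reflexivity proved by (@eqm_refl K N)
  symmetry proved by (@eqm_sym K N)
  transitivity proved by (@eqm_trans K N) as eqm_rel.
Add Parametric Morphism (K : numFieldType) (N : nat) : (@GRing.add {poly K}) with signature
  (@eqm K N) ==> (@eqm K N) ==> (@eqm K N) as eqm_add_mor.
Proof. by move=> *; apply: eqmD. Qed.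
Add Parametric Morphism (K : numFieldType) (N : nat) : (@GRing.mul {poly K}) with signature
  (@eqm K N) ==> (@eqm K N) ==> (@eqm K N) as eqm_mul_mor.
Proof. by move=> *; apply: eqmM. Qed.
Add Parametric Morphism (K : numFieldType) (N : nat) : (@GRing.opp {poly K}) with signature
  (@eqm K N) ==> (@eqm K N) as eqm_opp_mor.
Proof. by move=> *; apply: eqmN. Qed.
Add Parametric Morphism (K : numFieldType) (N : nat) (c : K) : (@GRing.scale K {poly K} c) with signature
  (@eqm K N) ==> (@eqm K N) as eqm_scale_mor.
Proof. by move=> *; apply: eqmZ. Qed.
Add Parametric Morphism (K : numFieldType) (N : nat) (c : K) : (@subst K c) with signature
  (@eqm K N) ==> (@eqm K N) as eqm_subst_mor.
Proof. by move=> *; apply: eqm_subst. Qed.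

Section Bern.
Variable K : numFieldType.
Variable b : nat -> K.
Hypothesis hb : is_bernoulli b.
Variable T : nat.

Definition ex : {poly K} := \poly_(i < T) (i`!%:R)^-1.
Definition EE : {poly K} := \poly_(i < T) ((i.+1)`!%:R)^-1.
Definition bet : {poly K} := \poly_(i < T) (b i / (i`!)%:R).
Definition PP : {poly K} := \poly_(i < T) (2 * (1 - 2 ^+ i.+1) * b i.+1 / (i.+1)`!%:R).

Lemma fact_neq0 n : (n`!%:R : K) != 0.
Proof. by rewrite pnatr_eq0 -lt0n fact_gt0. Qed.

Lemma R1 : eqm T (bet * EE) 1.
Proof.
move=> m hm; rewrite coefM coef1 -(hb m); apply: eq_bigr => j _.
have hj : (j <= m)%N by rewrite -ltnS.
rewrite !coef_poly (leq_ltn_trans hj hm) (leq_ltn_trans (leq_subr j m) hm).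
by rewrite -subSn // invfM mulrA.
Qed.

Lemma R4 : eqm T ('X * EE) (ex - 1).
Proof.
move=> [|i] hi; rewrite coefXM coefB coef1 !coef_poly hi //=.
  by rewrite invr1 subrr.
by rewrite (ltnW hi) subr0.
Qed.

Lemma subst1p (p : {poly K}) : subst 1 p = p.
Proof. by apply/polyP => i; rewrite coef_subst expr1n mul1r. Qed.
Lemma subst0p (p : {poly K}) : subst 0 p = (p`_0)%:P.
Proof. by apply/polyP => i; rewrite coef_subst coefC; case: i => [|i]; rewrite ?expr0 ?mul1r // expr0n mul0r. Qed.

Lemma R6 a c : eqm T (subst a ex * subst c ex) (subst (a + c) ex).
Proof.
move=> m hm; rewrite coefM coef_subst addrC exprDn coef_poly hm.
rewrite mulr_suml; apply: eq_bigr => [[j hj]] _ /=.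
have hj' : (j <= m)%N by rewrite -ltnS.
rewrite !coef_subst !coef_poly (leq_ltn_trans hj' hm) (leq_ltn_trans (leq_subr j m) hm).
have hf := bin_fact hj'.
have -> : (m`!%:R : K) = ('C(m, j))%:R * (j`!)%:R * ((m - j)`!)%:R.
  by rewrite -!natrM -hf mulnA.
rewrite -mulr_natr; field.
by rewrite !fact_neq0 pnatr_eq0 -lt0n bin_gt0 hj'.
Qed.

Lemma ex_exn : eqm T (ex * subst (-1) ex) 1.
Proof.
have := R6 1 (-1); rewrite subst1p subrr subst0p coef_poly.
case: T => [|T'] h; first by move=> i.
by rewrite h /= invr1.
Qed.

Lemma ex_ex : eqm T (ex * ex) (subst 2 ex).
Proof. by have := R6 1 1; rewrite subst1p. Qed.
End Bern.

Section Bern2.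
Variable K : numFieldType.
Variable b : nat -> K.
Hypothesis hb : is_bernoulli b.
Variable T : nat.
Local Notation ex := (ex K T).
Local Notation EE := (EE K T).
Local Notation bet := (bet b T).
Local Notation PP := (PP b T).
Local Notation exn := (subst (-1) ex).

Lemma R7 : eqm T ('X * subst (-1) EE) (1 - exn).
Proof.
have := eqm_subst (-1) (@R4 K T); rewrite substMX substB subst1 => h.
have -> : 'X * subst (-1) EE = - ((-1) *: ('X * subst (-1) EE)) by rewrite scaleN1r opprK.
by rewrite h opprB.
Qed.

Lemma D_EE N : (N < T)%N -> eqm N EE (ex * subst (-1) EE).
Proof.
move=> hN; apply: eqm_cancelX.
have h4 := eqm_le hN (@R4 K T); have h7 := eqm_le hN R7; have h1 := eqm_le hN (@ex_exn K T).
rewrite h4 mulrCA h7 mulrBr mulr1 h1; reflexivity.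
Qed.

Lemma D_bet N : (N < T)%N -> eqm N bet (subst (-1) bet - 'X).
Proof.
move=> hN.
have hE : eqm N (EE * (subst (-1) bet - 'X)) 1.
  have h1 : eqm N (subst (-1) (bet * EE)) 1.
    by rewrite (eqm_le (ltnW hN) (@R1 K b hb T)) subst1.
  rewrite (D_EE hN) mulrBr mulrAC -mulrA -substM.
  rewrite h1 mulr1 -mulrA (mulrC _ 'X) (eqm_le (ltnW hN) R7) mulrBr mulr1.
  rewrite (eqm_le (ltnW hN) (@ex_exn K T)).
  apply: eqm_eq; ring.
transitivity (bet * (EE * (subst (-1) bet - 'X))).
  by rewrite hE mulr1.
by rewrite mulrA (eqm_le (ltnW hN) (@R1 K b hb T)) mul1r.
Qed.
End Bern2.

Section Bern3.
Variable K : numFieldType.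
Variable b : nat -> K.
Hypothesis hb : is_bernoulli b.

Lemma bet_rel i : b i = (-1) ^+ i * b i - (i == 1)%:R * (i`!)%:R.
Proof.
have h := @D_bet K b hb i.+2 i.+1 (ltnSn _) i (ltnSn _).
move: h; have hi2 : (i < i.+2)%N by rewrite ltnS leqnSn.
rewrite coefB coef_subst coefX !coef_poly hi2 => h.
have hf := fact_neq0 K i.
apply: (mulIf (invr_neq0 hf)); rewrite h; case: (i == 1) => /=; by field.
Qed.

Lemma b_one : b 1 = - 2^-1.
Proof.
have := bet_rel 1; rewrite /= expr1 mulN1r mul1r => h.
have h2 : (2 : K) != 0 by rewrite pnatr_eq0.
have e : b 1 + b 1 = -1.
  rewrite {1}h (_ : 1`! = 1%N) //; ring.
by apply: (mulIf h2); rewrite mulNr mulVf // -e; ring.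
Qed.

Lemma b_odd j : b (2 * j).+3 = 0.
Proof.
have := bet_rel (2 * j).+3.
have -> : ((2 * j).+3 == 1%N) = false by [].
have -> : (-1 : K) ^+ (2 * j).+3 = -1.
  by rewrite -signr_odd /= oddM andFb expr1.
rewrite mul0r subr0 mulN1r => h.
have h2 : (2 : K) != 0 by rewrite pnatr_eq0.
have e : 2 * b (2 * j).+3 = 0.
  rewrite (_ : 2 = 1 + 1) // mulrDl mul1r {2}h; ring.
by move: e => /eqP; rewrite mulf_eq0 (negbTE h2) /= => /eqP.
Qed.
End Bern3.

Section Bern4.
Variable K : numFieldType.
Variable b : nat -> K.
Hypothesis hb : is_bernoulli b.
Variable T : nat.
Local Notation ex := (ex K T).
Local Notation EE := (EE K T).
Local Notation bet := (bet b T).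
Local Notation PP := (PP b T).

Lemma L_XP : eqm T ('X * PP) (2 *: bet - 2 *: subst 2 bet).
Proof.
move=> [|i] hi; rewrite coefXM coefB !coefZ coef_subst !coef_poly hi /=.
  by rewrite expr0 mul1r subrr.
rewrite (ltnW hi); ring.
Qed.

Lemma L_EE2 N : (N < T)%N -> eqm N (2 *: subst 2 EE) (EE * (ex + 1)).
Proof.
move=> hN; apply: eqm_cancelX.
have h4 := eqm_le hN (@R4 K T).
have hx := eqm_le hN (@ex_ex K T).
transitivity (subst 2 ('X * EE)).
  by apply: eqm_eq; rewrite substMX scalerAr.
rewrite h4 substB subst1 -hx mulrA h4; apply: eqm_eq; ring.
Qed.

Lemma L_b2 N : (N < T)%N -> eqm N ((ex + 1) * subst 2 bet) (2 *: bet).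
Proof.
move=> hN.
have h1 := eqm_le (ltnW hN) (@R1 K b hb T).
have h2 : eqm N (subst 2 EE * subst 2 bet) 1.
  by rewrite -substM mulrC h1 subst1.
transitivity ((ex + 1) * subst 2 bet * (bet * EE)).
  by rewrite h1 mulr1.
transitivity (bet * subst 2 bet * (EE * (ex + 1))).
  by apply: eqm_eq; ring.
rewrite -(L_EE2 hN) -scalerAr; apply: eqmZ.
by rewrite -mulrA (mulrC (subst 2 bet)) h2 mulr1.
Qed.

Lemma L_b1 : eqm T ((ex + 1) * bet) ('X + 2 *: bet).
Proof.
transitivity ((ex - 1) * bet + 2 *: bet).
  by apply: eqm_eq; rewrite scaler_nat; ring.
rewrite -(@R4 K T) -mulrA (mulrC EE bet) (@R1 K b hb T) mulr1; reflexivity.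
Qed.

Lemma L_P N : (N.+1 < T)%N -> eqm N ((ex + 1) * PP) 2.
Proof.
move=> hN; apply: eqm_cancelX.
have hN' : (N.+1 <= T)%N by apply: ltnW.
transitivity ((ex + 1) * ('X * PP)).
  by apply: eqm_eq; ring.
rewrite (eqm_le hN' L_XP).
transitivity (2 *: ((ex + 1) * bet) - 2 *: ((ex + 1) * subst 2 bet)).
  by apply: eqm_eq; rewrite mulrBr -!scalerAr.
rewrite (eqm_le hN' L_b1) (L_b2 hN).
by apply: eqm_eq; rewrite !scaler_nat; ring.
Qed.

Lemma L_Pn N : (N.+1 < T)%N -> eqm N (subst (-1) PP) (ex * PP).
Proof.
move=> hN.
have hN' : (N <= T)%N by apply: leq_trans (ltnW hN); apply: leqnSn.
have h1 := L_P hN.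
have h2 : eqm N ((subst (-1) ex + 1) * subst (-1) PP) 2.
  by rewrite -(subst1 (-1)) -substD -substM h1 (_ : 2 = 1 + 1) // substD subst1.
have hxx := eqm_le hN' (@ex_exn K T).
have h3 : eqm N ((ex + 1) * subst (-1) PP) (2 * ex).
  transitivity (ex * ((subst (-1) ex + 1) * subst (-1) PP) - (ex * subst (-1) ex - 1) * subst (-1) PP).
    by apply: eqm_eq; ring.
  by rewrite h2 hxx subrr mul0r subr0 mulrC; reflexivity.
have h4 : eqm N (2 * subst (-1) PP) (2 * (ex * PP)).
  transitivity (((ex + 1) * subst (-1) PP) * PP).
    by rewrite -h1; apply: eqm_eq; ring.
  by rewrite h3 -mulrA; reflexivity.
have h2n : (2 : K) != 0 by rewrite pnatr_eq0.
move=> i hi; have := h4 i hi.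
rewrite !mulr_natl !coefMn => h; apply: (mulfI h2n); rewrite !mulr_natl.
done.
Qed.
End Bern4.

Section Core.
Variable K : numFieldType.
Variable b : nat -> K.
Hypothesis hb : is_bernoulli b.

Lemma sum_shift (F : nat -> K) a m : \sum_(a <= i < a + m) F i = \sum_(i < m) F (i + a)%N.
Proof. by rewrite -{1}(add0n a) big_addn addKn big_mkord. Qed.

Definition Pc (M : nat) : K := 2 * (1 - 2 ^+ M.+1) * b M.+1 / (M.+1)`!%:R.

Lemma Pcrel M : (-1) ^+ M * Pc M = \sum_(j < M.+1) Pc j / ((M - j)`!)%:R.
Proof.
have h := @L_Pn K b hb M.+3 M.+1 (ltnSn _) M (ltnSn _).
have h3 : (M < M.+3)%N by lia.
move: h; rewrite coef_subst coefMr coef_poly h3 => ->.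
apply: eq_bigr => [[j hj]] _ /=.
have hj' : (j <= M)%N by rewrite -ltnS.
have h4 : (M - j < M.+3)%N by apply: leq_ltn_trans (leq_subr _ _) _.
have h5 : (j < M.+3)%N by apply: leq_ltn_trans hj' _.
rewrite !coef_poly h4 h5.
rewrite /Pc; ring.
Qed.

Lemma Pc0 : Pc 0 = 1.
Proof. rewrite /Pc (b_one hb) /= (_ : 1`! = 1%N) //. by field. Qed.

Lemma Pc_even j : Pc (2 * j).+2 = 0.
Proof. by rewrite /Pc (b_odd hb) !mulr0 mul0r. Qed.

Variable n : nat.
Hypothesis hn : (1 <= n)%N.

Definition G (i : nat) : K :=
  if ((2 * n).-1 <= i)%N then (i`!)%:R / (((2 * n).-1)`!)%:R * Pc (i - (2 * n).-1) else 0.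

Lemma Gid M : G M = (-1) ^+ M.+1 * \sum_(i < M.+1) G i * ('C(M, i))%:R.
Proof.
rewrite /G; case: leqP => hM; last first.
  rewrite big1 ?mulr0 // => [[i hi]] _ /=.
  by move: hi; rewrite ltnS => hi; rewrite leqNgt (leq_ltn_trans hi hM) // mul0r.
set a := (2 * n).-1.
have ha : a = (2 * n).-1 by [].
have [M' ->] : exists M', M = (a + M')%N by exists (M - a)%N; rewrite subnKC.
rewrite -(big_mkord xpredT (fun i => (if (a <= i)%N then i`!%:R / a`!%:R * Pc (i - a) else 0) * 'C(a + M', i)%:R)).
rewrite (big_cat_nat (n := a)) //=; last by rewrite -addnS leq_addr.
rewrite big1_seq ?add0r; last first.
  move=> i; rewrite mem_index_iota leq0n /= => hi.
  by rewrite leqNgt hi mul0r.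
rewrite -addnS sum_shift.
have e : forall i : 'I_M'.+1, (if (a <= i + a)%N then (i + a)`!%:R / a`!%:R * Pc (i + a - a) else 0) * 'C(a + M', i + a)%:R
   = (a + M')`!%:R / a`!%:R * (Pc i / ((M' - i)`!)%:R).
  move=> [i hi] /=; rewrite leq_addl addnK.
  have hi' : (i + a <= a + M')%N by rewrite addnC leq_add2l -ltnS.
  have hf := bin_fact hi'.
  have -> : (a + M')`!%:R = ('C(a + M', i + a) * (i + a)`! * (a + M' - (i + a))`!)%:R :> K.
    by rewrite -hf mulnA.
  have -> : (a + M' - (i + a))%N = (M' - i)%N by rewrite (addnC i a) subnDl.
  rewrite !natrM; field.
  by rewrite !fact_neq0.
rewrite (eq_bigr _ (fun i _ => e i)) -mulr_sumr -Pcrel addKn.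
have s : (-1) ^+ (a + M'.+1) * (-1) ^+ M' = 1 :> K.
  rewrite -exprD (_ : ((a + M'.+1) + M' = 2 * (n + M'))%N); last by rewrite ha; lia.
  by rewrite exprM sqrrN !expr1n.
transitivity (((a+M')`!%:R / a`!%:R * Pc M') * ((-1) ^+ (a + M'.+1) * (-1) ^+ M')).
  by rewrite s mulr1.
ring.
Qed.

Lemma G_even k : (n <= k)%N -> G (2 * k) = relcoef b n k.
Proof.
move=> hk; have [d ->] : exists d, k = (n + d)%N by exists (k - n)%N; rewrite subnKC.
rewrite /G /relcoef /bigB.
have ha : ((2 * n).-1 <= 2 * (n + d))%N by lia.
rewrite ha addKn /=.
have e1 : (2 * (n + d) - (2 * n).-1 = (2 * d).+1)%N by lia.
have e2 : (2 * d.+1 = (2 * d).+2)%N by lia.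
have hf := bin_fact ha.
rewrite e1 in hf; rewrite e1 /Pc e2.
have -> : ((2 * (n + d))`!%:R : K) = ('C(2 * (n + d), (2 * n).-1) * ((2 * n).-1)`! * ((2 * d).+1)`!)%:R.
  by rewrite -hf mulnA.
have E : (((2 * d).+2)`!%:R : K) = (2 * d).+2%:R * ((2 * d).+1)`!%:R by rewrite factS natrM.
rewrite E.
move: (fact_neq0 K (2 * d).+1) (fact_neq0 K (2 * n).-1).
move: ((2 * d).+1)`! ((2 * n).-1)`! => f1 f2 hf1 hf2.
rewrite !natrM natrX.
have -> : (2 : K) ^+ (2 * d).+2 = (2 ^+ 2) ^+ d.+1 by rewrite -exprM e2.
have -> : (2 : K) ^+ 2 = 4%:R by rewrite expr2 -natrM.
rewrite exprS (exprS _ d).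
have ss : (-1) ^+ d * (-1) ^+ d = 1 :> K by rewrite -exprD -signr_odd addnn odd_double.
have e3 : ((2 * d).+2%:R : K) = 2 * d.+1%:R by rewrite -natrM; congr _%:R; lia.
rewrite e3.
set C := 'C(_, _)%:R.
transitivity (-1 * ((-1) ^+ d * (-1) ^+ d) * (4 * 4 ^+ d - 1) * b (2 * d).+2 / d.+1%:R * C); last by ring.
rewrite ss mulr1; field.
by rewrite nat1r pnatr_eq0 hf1 hf2.
Qed.

Lemma G_odd k : G (2 * k).+1 = ((k.+1 == n)%N)%:R.
Proof.
rewrite /G; case: ifP => h.
  have [hkn|hne] := eqVneq k.+1 n.
    have e : ((2 * n).-1 = (2 * k).+1)%N by rewrite -hkn; lia.
    by rewrite e subnn Pc0 mulr1 divff // fact_neq0.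

  have [d hd] : exists d, ((2 * k).+1 - (2 * n).-1 = (2 * d).+2)%N.
    exists (k - n)%N; move: h hne => /leP h /eqP hne; lia.
  by rewrite hd Pc_even mulr0.
case: eqP => // hk; move: h; rewrite -hk; lia.
Qed.

Lemma G_small i : (i < (2 * n).-1)%N -> G i = 0.
Proof. by move=> h; rewrite /G leqNgt h. Qed.
End Core.

Section CoreSum.
Variable K : numFieldType.
Variable b : nat -> K.
Hypothesis hb : is_bernoulli b.

Lemma sum_even_odd (F : nat -> K) m :
  \sum_(i < 2 * m) F i = \sum_(k < m) (F (2 * k)%N + F (2 * k).+1).
Proof.
elim: m => [|m IH]; first by rewrite !big_ord0.
rewrite (_ : (2 * m.+1 = (2 * m).+2)%N); last by lia.
by rewrite !big_ord_recr /= IH addrA.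
Qed.

Lemma sum_delta (F : nat -> K) m j : (j < m)%N ->
  \sum_(i < m) ((i : nat) == j)%:R * F i = F j.
Proof.
move=> hj; rewrite (bigD1 (Ordinal hj)) //= eqxx mul1r big1 ?addr0 // => i hi.
by rewrite (_ : ((i : nat) == j) = false) ?mul0r //; apply/negbTE; move: hi; apply: contra => /eqP h; apply/eqP/val_inj.
Qed.

Lemma sum_delta' (F : nat -> K) m j : (j < m)%N ->
  \sum_(i < m) F i * (j == (i : nat))%:R = F j.
Proof.
move=> hj; rewrite -(sum_delta F hj); apply: eq_bigr => i _; rewrite mulrC eq_sym //.
Qed.

Definition W (M i : nat) : K := ((M == i)%N)%:R - (-1) ^+ M.+1 * ('C(M, i))%:R.

Lemma CoreSum n K' M : (1 <= n)%N -> (n <= K'.+1)%N -> (M < (2 * K').+2)%N ->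
  \sum_(n <= k < K'.+1) relcoef b n k * W M (2 * k) + W M (2 * n).-1 = 0.
Proof.
move=> hn hnK hM.
have H0 : \sum_(i < 2 * K'.+1) G b n i * W M i = 0.
  rewrite /W; under eq_bigr do rewrite mulrBr.
  rewrite big_split /= sumrN.
  have -> : \sum_(i < 2 * K'.+1) G b n i * (M == i)%:R = G b n M.
    by rewrite sum_delta' //; lia.
  have -> : \sum_(i < 2 * K'.+1) G b n i * ((-1) ^+ M.+1 * 'C(M, i)%:R) =
            (-1) ^+ M.+1 * \sum_(i < M.+1) G b n i * 'C(M, i)%:R.
    rewrite mulr_sumr (big_ord_widen (2 * K'.+1) (fun i => (-1) ^+ M.+1 * (G b n i * 'C(M, i)%:R))); last by lia.
    rewrite [RHS]big_mkcond; apply: eq_bigr => i _.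
    case: ltnP => hi /=; first by ring.
    by rewrite bin_small ?mulr0.
  by rewrite -(Gid hb hn) subrr.
rewrite (sum_even_odd (fun i => G b n i * W M i)) big_split /= in H0.
rewrite -[RHS]H0; congr (_ + _).
  rewrite big_geq_mkord big_mkcond; apply: eq_bigr => k _ /=.
  case: leqP => hk; first by rewrite G_even.
  by rewrite G_small ?mul0r //; lia.
rewrite (_ : (2 * n).-1 = (2 * n.-1).+1)%N; last by lia.
rewrite -(sum_delta (fun k => W M (2 * k).+1) (j := n.-1) (m := K'.+1)); last by lia.
apply: eq_bigr => k _; rewrite (G_odd hb hn).
rewrite (_ : (k.+1 == n) = ((k : nat) == n.-1)) //.
by apply/eqP/eqP => h; lia.
Qed.
End CoreSum.

Section FpsPoly.
Variable K : numFieldType.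
Definition fap (N : nat) (f : fps K) (p : {poly K}) := forall m, (m < N)%N -> f m = p`_m.

Variable N : nat.
Lemma fap1 : fap N (fps1 K) 1. Proof. by move=> m _; rewrite coef1. Qed.
Lemma fapu : fap N (fpsu K) 'X. Proof. by move=> m _; rewrite coefX. Qed.
Lemma fapD f g p q : fap N f p -> fap N g q -> fap N (fpsadd f g) (p + q).
Proof. by move=> h1 h2 m hm; rewrite coefD /fpsadd h1 // h2. Qed.
Lemma fapB f g p q : fap N f p -> fap N g q -> fap N (fpssub f g) (p - q).
Proof. by move=> h1 h2 m hm; rewrite coefB /fpssub h1 // h2. Qed.
Lemma fapZ c f p : fap N f p -> fap N (fpsscale c f) (c *: p).
Proof. by move=> h m hm; rewrite coefZ /fpsscale h. Qed.
Lemma fapM f g p q : fap N f p -> fap N g q -> fap N (fpsmul f g) (p * q).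
Proof.
move=> h1 h2 m hm; rewrite coefM /fpsmul; apply: eq_bigr => j _.
have hj : (j <= m)%N by rewrite -ltnS.
rewrite h1; last by apply: leq_ltn_trans hm.
rewrite h2 //; apply: leq_ltn_trans hm; exact: leq_subr.
Qed.
Lemma fapX f p k : fap N f p -> fap N (fpspow f k) (p ^+ k).
Proof.
move=> h; elim: k => [|k IH]; first by rewrite expr0; apply: fap1.
by rewrite exprS /fpspow iterS; apply: fapM.
Qed.
Lemma fap_eqm f p q : fap N f p -> eqm N p q -> fap N f q.
Proof. by move=> h1 h2 m hm; rewrite h1 // h2. Qed.
End FpsPoly.

Section Vpow.
Variable K : numFieldType.
Variable v : fps K.
Hypothesis hv : fpsmul (fpsadd (fps1 K) (fpsu K)) (fpsadd (fps1 K) v) = fps1 K.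
Variable T : nat.
Definition Vp : {poly K} := \poly_(i < T) v i.

Lemma fapV : fap T v Vp. Proof. by move=> m hm; rewrite coef_poly hm. Qed.

Lemma hVp : eqm T ((1 + 'X) * (1 + Vp)) 1.
Proof.
move=> m hm.
have h := fapM (fapD (@fap1 K T) (@fapu K T)) (fapD (@fap1 K T) fapV) hm.
by rewrite -h hv /fps1 coef1.
Qed.

Lemma Vrec j : eqm T (Vp ^+ j.+1) (- ('X * (Vp ^+ j + Vp ^+ j.+1))).
Proof.
transitivity ((Vp - ((1 + 'X) * (1 + Vp) - 1)) * Vp ^+ j).
  by rewrite hVp subrr subr0 exprS; reflexivity.
apply: eqm_eq; rewrite exprS; ring.
Qed.

Lemma Vcoef j m : (m < T)%N ->
  (Vp ^+ j.+1)`_m = if m is m'.+1 then (-1) ^+ m * ('C(m', j))%:R else 0.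
Proof.
elim: j m => [|j IHj] m.
  elim: m => [|m IHm] hm.
    by rewrite (Vrec 0 hm) coefN coefXM oppr0.
  rewrite (Vrec 0 hm) coefN coefXM /= coefD expr0 coef1 IHm; last by apply: ltnW.
  case: m {IHm hm} => [|m] /=; first by rewrite expr1 addr0 mulr1.
  by rewrite add0r !bin0 !mulr1 (exprS _ m.+1) mulN1r.
elim: m => [|m IHm] hm.
  by rewrite (Vrec j.+1 hm) coefN coefXM oppr0.
rewrite (Vrec j.+1 hm) coefN coefXM /= coefD IHm ?(IHj m) //; try by apply: ltnW.
case: m {IHm hm} => [|m] /=; first by rewrite addr0 oppr0 bin0n mulr0.
by rewrite binS natrD !exprS; ring.
Qed.

Lemma calY_coef k m : (m < T)%N ->
  calY v k m = (-1) ^+ k * (((m == k)%N)%:R - (Vp ^+ k)`_m).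
Proof.
move=> hm; rewrite /calY /fpsscale /fpssub.
rewrite (@fapX K T _ _ k (@fapu K T) m hm) (@fapX K T _ _ k fapV m hm) coefXn //.
Qed.
End Vpow.

Section Part2.
Variable K : numFieldType.
Variable b : nat -> K.
Hypothesis hb : is_bernoulli b.
Variable v : fps K.
Hypothesis hv : fpsmul (fpsadd (fps1 K) (fpsu K)) (fpsadd (fps1 K) v) = fps1 K.

Lemma calY_S j M : calY v j.+1 M.+1 = (-1) ^+ j.+1 * W K M j.
Proof.
rewrite (@calY_coef K v M.+2 j.+1 M.+1 (ltnSn _)) (@Vcoef K v hv M.+2 j M.+1 (ltnSn _)).
by rewrite /W eqSS.
Qed.

Lemma calY_0 j : calY v j.+1 0 = 0.
Proof.
rewrite (@calY_coef K v 1 j.+1 0 (ltnSn _)) (@Vcoef K v hv 1 j 0 (ltnSn _)).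
by rewrite /= subr0 mulr0.
Qed.

Lemma Part2core n K' m : (1 <= n)%N -> (m <= (2 * K').+1)%N ->
  \sum_(n <= k < K'.+1) relcoef b n k * calY v (2 * k).+1 m = calY v (2 * n) m.
Proof.
move=> hn hm.
have e2n : (2 * n = ((2 * n).-1).+1)%N by lia.
case: m hm => [|M] hM.
  rewrite big1_seq; last by move=> k _; rewrite calY_0 mulr0.
  by rewrite e2n calY_0.
rewrite e2n calY_S.
have -> : (-1) ^+ ((2 * n).-1).+1 = 1 :> K by rewrite -e2n exprM sqrrN !expr1n.
rewrite mul1r.
case: (leqP n K'.+1) => hnK.
  have hM' : (M < (2 * K').+2)%N by lia.
  have hC := CoreSum hb hn hnK hM'.
  apply: (addrI (\sum_(n <= k < K'.+1) relcoef b n k * W K M (2 * k))).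
  rewrite hC -big_split /= big1 // => k _.
  rewrite calY_S -signr_odd /= oddM andFb expr1; ring.
rewrite big_geq; last by apply: ltnW.
rewrite /W bin_small; last by lia.
rewrite (_ : (M == (2 * n).-1) = false); last by apply/negbTE/eqP; lia.
by rewrite mulr0 subr0.
Qed.
End Part2.

Add Parametric Morphism (K : numFieldType) (N k : nat) : (fun p : {poly K} => p ^+ k) with signature
  (@eqm K N) ==> (@eqm K N) as eqm_exp_mor.
Proof. by move=> *; apply: eqmX. Qed.

Section Laur.
Variable K : numFieldType.
Variable v : fps K.
Hypothesis hv : fpsmul (fpsadd (fps1 K) (fpsu K)) (fpsadd (fps1 K) v) = fps1 K.
Variable L : nat.
Local Notation Vp := (@Vp K v L).
Definition Wp : {poly K} := 1 + Vp.
Local Notation Z := ('X + 1%:P : {poly K}).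
Definition Iq (x : laurent K) : {poly K} := (x.1 \Po Z) * Wp ^+ x.2.

Lemma hW : eqm L (Z * Wp) 1.
Proof. by rewrite polyC1 addrC; apply: (hVp hv). Qed.

Lemma hWk k : eqm L ((Z * Wp) ^+ k) 1.
Proof. by have := eqmX k hW; rewrite expr1n. Qed.

Lemma I_add x y : eqm L (Iq (ladd x y)) (Iq x + Iq y).
Proof.
rewrite /Iq /ladd /= comp_polyD !comp_polyM !comp_Xn_poly.
transitivity ((x.1 \Po Z) * Wp ^+ x.2 * (Z * Wp) ^+ y.2 + (y.1 \Po Z) * Wp ^+ y.2 * (Z * Wp) ^+ x.2).
  by apply: eqm_eq; rewrite !exprMn exprD; ring.
apply: eqmD; apply: eqm_trans (eqmMl _ (hWk _)) _; rewrite mulr1; reflexivity.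
Qed.

Lemma I_scale c x : Iq (lscale c x) = c *: Iq x.
Proof. by rewrite /Iq /lscale /= comp_polyZ scalerAl. Qed.

Lemma I_mul x y : Iq (lmul x y) = Iq x * Iq y.
Proof. rewrite /Iq /lmul /= comp_polyM exprD; ring. Qed.

Lemma I_const c : Iq (lconst c) = c%:P.
Proof. by rewrite /Iq /lconst /= comp_polyC expr0 mulr1. Qed.

Lemma I_t : Iq (lt K) = Z.
Proof. by rewrite /Iq /lt /= comp_polyX expr0 mulr1. Qed.

Lemma I_tinv : Iq (ltinv K) = Wp.
Proof. by rewrite /Iq /ltinv /= -polyC1 comp_polyC polyC1 mul1r expr1. Qed.

Lemma I_pow x k : Iq (lpow x k) = Iq x ^+ k.
Proof.
elim: k => [|k IH]; first by rewrite /lpow /= I_const expr0 polyC1.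
by rewrite /lpow iterS -/(lpow x k) I_mul IH exprS.
Qed.

Lemma I_sub x y : eqm L (Iq (lsub x y)) (Iq x - Iq y).
Proof. by rewrite /lsub I_add I_scale scaleN1r; reflexivity. Qed.

Lemma I_lsum n K' F : eqm L (Iq (lsum n K' F)) (\sum_(n <= k < K') Iq (F k)).
Proof.
rewrite /lsum /index_iota; elim: (iota n (K' - n)) => [|k s IH] /=.
  by rewrite big_nil I_const polyC0; reflexivity.
by rewrite big_cons I_add IH; reflexivity.
Qed.

Lemma I_OY j : eqm L (Iq (OY K j)) ((-1) ^+ j *: ('X ^+ j - Vp ^+ j)).
Proof.
rewrite /OY I_scale; apply: eqmZ.
set A := lsub (lt K) (lconst 1).
set B := lsub (ltinv K) (lconst 1).
have hA : eqm L (Iq A) 'X.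
  by rewrite (I_sub (lt K) (lconst 1)) I_t I_const polyC1 addrK; reflexivity.
have hB : eqm L (Iq B) Vp.
  by rewrite (I_sub (ltinv K) (lconst 1)) I_tinv I_const polyC1 /Wp; apply: eqm_eq; ring.
apply: eqm_trans (I_sub _ _) _; rewrite !I_pow; apply: eqmB; [exact: eqmX hA | exact: eqmX hB].
Qed.

Lemma I_OY_coef j m : (m < L)%N -> (Iq (OY K j))`_m = calY v j m.
Proof.
move=> hm; rewrite (I_OY j hm) (@calY_coef K v L j m hm) coefZ coefB coefXn.
done.
Qed.

Lemma tideal_of_I x : eqm L (Iq x) 0 -> in_tideal L x.
Proof.
move=> h.
have h1 : eqm L (x.1 \Po Z) 0.
  transitivity ((x.1 \Po Z) * (Z * Wp) ^+ x.2).
    by rewrite hWk mulr1; reflexivity.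
  transitivity (Iq x * Z ^+ x.2).
    by apply: eqm_eq; rewrite /Iq exprMn; ring.
  by rewrite h mul0r; reflexivity.
have ht : take_poly L (x.1 \Po Z) = 0.
  apply/polyP => i; rewrite coef_take_poly coef0; case: ifP => // hi.
  by rewrite h1 // coef0.
have e := poly_take_drop L (x.1 \Po Z); rewrite ht add0r in e.
move: e; set q := x.1 \Po Z; move: (drop_poly L q) => D e.
exists (D \Po ('X - 1)), x.2.
rewrite -[in LHS](comp_polyXaddC_K x.1 1) -/q -e comp_polyM comp_Xn_poly polyC1.
by rewrite (mulrC (D \Po _)).
Qed.
End Laur.

Unset Implicit Arguments.
Theorem proposition3 (R : realType) (b : nat -> R[i]) (v : fps R[i]) :
  is_bernoulli b ->
  (* v = (1+u)^-1 - 1, i.e. (1+u)(1+v) = 1 in C[[u]] *)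
  fpsmul (fpsadd (fps1 R[i]) (fpsu R[i])) (fpsadd (fps1 R[i]) v) = fps1 R[i] ->
  (* Part 1: calY_0 = 0 *)
  calY v 0 = fps0 R[i] /\
  (* Part 2: u-adically convergent relation in sl2[[u]] *)
  (forall n : nat, (1 <= n)%N ->
     forall m : nat, exists N : nat, forall K : nat, (N <= K)%N ->
       \sum_(n <= k < K.+1) relcoef b n k * calY v (2 * k).+1 m
       = calY v (2 * n) m) /\
  (* Part 3: images in OA / I_{(t-1)^L} *)
  (forall L : nat, (1 <= L)%N ->
     (forall k : nat, (L <= k)%N -> in_tideal L (OY R[i] k)) /\
     (forall n K : nat, (1 <= n)%N -> (L <= (2 * K).+1)%N ->
        in_tideal L
          (lsub (OY R[i] (2 * n))
                (lsum n K.+1 (fun k => lscale (relcoef b n k) (OY R[i] (2 * k).+1)))))).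
Proof.
move=> hb hv; split.
  apply: functional_extensionality => m.
  by rewrite /calY /fpsscale /fpssub /fps0 subrr mulr0.
split.
  move=> n hn m; exists m => K hK; apply: (Part2core hb hv hn); lia.
move=> L hL; split.
  move=> k hk; apply: (tideal_of_I hv) => m hm.
  rewrite coef0 (I_OY_coef hv k hm).
  case: k hk => [|k] hk; first lia.
  rewrite (@calY_coef _ v L k.+1 m hm) (@Vcoef _ v hv L k m hm).
  case: m hm => [|M] hm /=; first by rewrite subr0 mulr0.
  rewrite bin_small; last by lia.
  rewrite (_ : (M.+1 == k.+1) = false) ?mulr0 ?subr0 ?mulr0 //.
  by apply/negbTE/eqP; lia.
move=> n K hn hLK; apply: (tideal_of_I hv) => m hm.
rewrite coef0 (I_sub hv _ _ hm) coefB (I_lsum hv _ _ _ hm) coef_sum.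
under eq_bigr do rewrite I_scale coefZ (I_OY_coef hv _ hm).
rewrite (I_OY_coef hv _ hm) (Part2core hb hv hn) ?subrr //; lia.
Qed.
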